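(* Let $X$ be a Tychonoff space that is locally dense-pseudocompact. Then $X$ is discrete.
   Context: A space is pseudocompact if every continuous real-valued function on it is bounded. A space $Y$ is dense-pseudocompact if every dense subset of $Y$ (with the subspace topology) is pseudocompact. A space $X$ is locally dense-pseudocompact if for every $x\in X$ and every neighborhood $U$ of $x$ there is a neighborhood $V$ of $x$ with $V\subset U$ such that $V$ (as a subspace) is dense-pseudocompact. *)

(* Defs.v *)
From HB Require Import structures.
From mathcomp Require Import all_boot all_order all_algebra.
From mathcomp Require Import all_classical all_reals topology normedtype.
Set Implicit Arguments. Unset Strict Implicit. Unset Printing Implicit Defensive.
Import numFieldNormedType.Exports.
Import Order.TTheory GRing.Theory Num.Theory.
Local Open Scope classical_set_scope.
Local Open Scope ring_scope.

Definition tychonoff_space (X : topologicalType) :=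
  accessible_space X /\ completely_regular_space X.

Definition pseudocompact_set (R : realType) (X : topologicalType) (S : set X) :=
  forall f : X -> R, {within S, continuous f} ->
    exists M : R, forall x, S x -> `|f x| <= M.

(* D is a dense subset of the subspace Y: D ⊆ Y and Y ⊆ closure D
   (relative closure of D in Y is closure D ∩ Y). *)
Definition dense_in (X : topologicalType) (Y D : set X) :=
  D `<=` Y /\ Y `<=` closure D.

Definition dense_pseudocompact (R : realType) (X : topologicalType) (Y : set X) :=
  forall D : set X, dense_in Y D -> pseudocompact_set R D.

Definition locally_dense_pseudocompact (R : realType) (X : topologicalType) :=
  forall (x : X) (U : set X), nbhs x U ->
    exists V : set X, [/\ nbhs x V, V `<=` U & dense_pseudocompact R V].

Definition discrete_sp (X : topologicalType) := forall x : X, open [set x].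

(* Main.v *)
Require Import Defs.
From HB Require Import structures.
From mathcomp Require Import all_boot all_order all_algebra.
From mathcomp Require Import all_classical all_reals topology normedtype.
Import numFieldNormedType.Exports.
Import Order.TTheory GRing.Theory Num.Theory.
Local Open Scope classical_set_scope.
Local Open Scope ring_scope.

Lemma step_lemma (R : realType) (X : topologicalType) (x : X) :
  tychonoff_space X -> ~ open [set x] ->
  forall U : set X, exists p : set X * set X,
    open U -> U x ->
    [/\ open p.1, open p.2, (p.1 `<=` U /\ p.1 !=set0), (p.2 `<=` U /\ p.2 x)
        & p.1 `&` p.2 = set0].
Proof.
move=> [acc crs] nox U.
have [oU|] := pselect (open U /\ U x); last first.
  by move=> h; exists (set0, set0) => oU Ux; exfalso; apply: h.
case: oU => oU Ux.
have [y [Uy yx]] : exists y, U y /\ y <> x.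
  apply: contrapT => H; apply: nox.
  suff -> : [set x] = U by [].
  apply/seteqP; split=> [z -> //|z Uz].
  by apply: contrapT => zx; apply: H; exists z.
have reg := @completely_regular_regular R X crs.
have cy : closed [set y] by exact: accessible_closed_set1.
have [A [B [oA oB Ax yB AB]]] :=
  (proj1 (regular_openP x) (reg x)) [set y] cy
  (fun h => yx (esym h)).
exists (B `&` U, A `&` U) => _ _; split.
- exact: openI.
- exact: openI.
- by split=> [z []//|]; exists y; split=> //; apply: yB.
- by split=> // z [].
- rewrite /= -subset0 => z [[Bz _] [Az _]].
  have : (A `&` B) z by split.
  by rewrite AB.
Qed.

Theorem mainTheorem5 (R : realType) (X : topologicalType) :
  tychonoff_space X -> locally_dense_pseudocompact R X -> discrete_sp X.
Proof.
move=> tych ldp x; apply: contrapT => nox.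
have [g Hg] := choice (@step_lemma R X x tych nox).
have [V [nV _ dpV]] := ldp x setT filterT.
move: nV; rewrite nbhsE => -[U0 [oU0 U0x] U0V].
pose Us n := iter n (fun U => (g U).2) U0.
pose Ws n := (g (Us n)).1.
have HU : forall n, [/\ open (Us n), Us n x & Us n `<=` U0].
  elim=> [|n [oU Ux sU]]; first by split.
  rewrite /Us /= -/(Us n).
  have [_ o2 _ [s2 x2] _] := Hg _ oU Ux.
  split=> //; exact: subset_trans s2 sU.
have decr : forall n m, (n <= m)%N -> Us m `<=` Us n.
  move=> n; elim=> [|m IH]; first by rewrite leqn0 => /eqP ->.
  rewrite leq_eqVlt => /orP [/eqP -> //|]; rewrite ltnS => /IH sm.
  have [oU Ux _] := HU m.
  have [_ _ _ [s2 _] _] := Hg _ oU Ux.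
  by apply: subset_trans sm.
have HW : forall n, [/\ open (Ws n), Ws n `<=` Us n & Ws n !=set0].
  move=> n; have [oU Ux _] := HU n.
  by have [o1 _ [s1 ne] _ _] := Hg _ oU Ux.
have disj : forall n m z, Ws n z -> Ws m z -> n = m.
  suff H : forall n m z, (n < m)%N -> Ws n z -> Ws m z -> False.
    move=> n m z a b; case: (ltngtP n m) => // nm; exfalso.
    - exact: H a b.
    - exact: H b a.
  move=> n m z nm a b.
  have [oU Ux _] := HU n.
  have [_ _ _ _ I] := Hg _ oU Ux.
  have : ((g (Us n)).1 `&` (g (Us n)).2) z.
    split; first exact: a.
    have [_ sW _] := HW m.
    by apply: (decr n.+1 m nm); apply: sW.
  by rewrite I.
pose W := \bigcup_n Ws n.
pose D := V `&` (W `|` ~` closure W).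
pose N z := xget 0%N [set n | Ws n z].
pose f z : R := (N z)%:R.
have WV : W `<=` V.
  move=> z [n _ Wz]; apply: U0V; have [_ sW _] := HW n.
  by have [_ _ s] := HU n; apply: s; apply: sW.
have dD : dense_in V D.
  split; first by move=> z [].
  move=> z Vz; have [cz|ncz] := pselect (closure W z).
    apply: (closureS _ cz) => w Ww; split; [exact: WV | by left].
  by apply: subset_closure; split=> //; right.
have Nn : forall n z, Ws n z -> N z = n.
  move=> n z Wz; apply: xget_unique => // m Wm; exact: disj Wm Wz.
have cf : {within D, continuous f}.
  apply: continuous_in_subspaceT => z; rewrite inE => -[Vz [[n _ Wz]|ncz]].
    apply: (near_cst_continuous (n%:R : R)).
    have [oW _ _] := HW n.
    have : nbhs z (Ws n) by apply: open_nbhs_nbhs.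
    by apply: filterS => w Ww; rewrite /f (Nn n w Ww).
  apply: (near_cst_continuous (0 : R)).
  have : nbhs z (~` closure W).
    by apply: open_nbhs_nbhs; split=> //; rewrite openC; exact: closed_closure.
  apply: filterS => w ncw; rewrite /f /N xgetPN // => m Wm; apply: ncw.
  by apply: subset_closure; exists m.
have [M HM] := dpV D dD f cf.
have [n Mn] : exists n : nat, M < n%:R.
  exists (Num.trunc `|M|).+1.
  apply: (le_lt_trans (ler_norm M)).
  by rewrite truncnS_gt.
have [_ _ [d Wd]] := HW n.
have Dd : D d by split; [apply: WV; exists n | left; exists n].
have h := HM d Dd.
have e : f d = n%:R by rewrite /f (Nn n d Wd).
rewrite e in h.
have h2 : n%:R <= M by apply: le_trans h; rewrite ler_norm.
by move: (lt_le_trans Mn h2); rewrite ltxx.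
Qed.
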